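(* Let $A\subset\mathcal{N}=\omega^\omega$, let $\mathcal{F}$ be a hereditary family of closed and discrete subsets of $A$, let $\{T_a : a\in A\}$ be an $(A,\mathcal{F})$-Reznichenko family of trees, $\mathcal{T}=\bigcup_{a\in A}T_a$, and let $R[\mathcal{F}]\subset 2^{\mathcal{T}}$ be the associated compact set. Then there exists a determining function (for $R[\mathcal{F}]\subset\mathbb{R}^{\mathcal{T}}$) $f:\mathcal{T}\to wf(A)\times\omega^{(\omega^{<\omega})}$.
   Context: A tree is a partially ordered set $(T,\leq)$ in which for each $t$ the set $\{s: s<t\}$ is well ordered and which has a minimum, the root. An immediate successor of $t$ is a node $s>t$ with no $r$ satisfying $t<r<s$. The $\alpha$-th level consists of the $t$ with $\{s:s<t\}$ of order type $\alpha$; the height is the least $\alpha$ with empty $\alpha$-th level. A segment is a set $S\subset T$ of pairwise comparable elements such that $t\leq r\leq s$ with $t,s\in S$ implies $r\in S$; it is initial if it contains the root. For a set $A$ with $|A|\leq\mathfrak{c}$ and a hereditary family $\mathcal{F}$ of subsets of $A$ (closed under subsets), an $(A,\mathcal{F})$-Reznichenko family of trees is a family $\{T_a:a\in A\}$ of trees such that: (1) each $T_a$ has height $\omega$ and every node has $\mathfrak{c}$ many immediate successors; (2) $T_a\cap A=\{a\}$ and $a$ is the root of $T_a$; (3) for every $t\in\bigcup_a T_a$, $\{a\in A: t\in T_a\}\in\mathcal{F}$; (4) for $a\neq b$ and segments $S\subset T_a$, $S'\subset T_b$, $|S\cap S'|\leq 1$; (5) for every $B\in\mathcal{F}$ and every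 disjoint family $\{S_b:b\in B\}$ with $S_b$ a finite initial segment of $T_b$, there are $\mathfrak{c}$ many $t$ that are simultaneously an immediate successor of $S_b$ in $T_b$ for all $b\in B$. $R[\mathcal{F}]\subset 2^{\mathcal{T}}$ is the family of all segments of all the trees $T_a$ (a compact set). A tree on $\omega$ is a set $T\subset\omega^{<\omega}$ closed under initial segments; $Tr\subset 2^{\omega^{<\omega}}$ is the compact metrizable space of all trees on $\omega$; a branch of $T$ is $a\in\omega^\omega$ with $a|n\in T$ for all $n$; $wf(A)\subset Tr$ is the set of trees on $\omega$ none of whose branches belongs to $A$ (with subspace topology), and $\omega^{(\omega^{<\omega})}$ carries the product topology. For an index set $\Gamma$, a compact $K\subset\mathbb{R}^\Gamma$ and a separable metrizable $D$, $f:\Gamma\to D$ is a determining function if for all $x\in K$, compact $C\subset D$ and $\varepsilon>0$, the set $\{\gamma\in f^{-1}(C): |x_\gamma|>\varepsilon\}$ is finite. *)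

(* Defs.v *)
From HB Require Import structures.
From mathcomp Require Import all_boot all_order all_algebra.
From mathcomp Require Import all_classical all_reals all_analysis.
Set Implicit Arguments. Unset Strict Implicit. Unset Printing Implicit Defensive.
Import Order.TTheory GRing.Theory Num.Theory.
Local Open Scope classical_set_scope.
Local Open Scope card_scope.

Definition BaireSpace : Type := {ptws nat -> nat}.

Definition closed_in (A B : set BaireSpace) : Prop := A `&` closure B `<=` B.

Definition discrete_subset (B : set BaireSpace) : Prop :=
  forall b, B b -> exists V : set BaireSpace, [/\ open V, V b & V `&` B `<=` [set b]].

Definition hereditary_closed_discrete (A : set BaireSpace) (F : set (set BaireSpace)) : Prop :=
  [/\ (forall B, F B -> B `<=` A),
      (forall B B', F B -> B' `<=` B -> F B'),
      (forall B, F B -> closed_in A B) &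
      (forall B, F B -> discrete_subset B)].

Section AbstractTrees.
Variable U : Type.
Implicit Types (T S : set U) (le : U -> U -> Prop).

Definition preds T le (t : U) : set U := [set s | T s /\ le s t /\ s <> t].

Definition is_root T le (r : U) : Prop := T r /\ (forall t, T t -> le r t).

Definition is_tree T le : Prop :=
  [/\ (forall t, T t -> le t t),
      (forall s t, T s -> T t -> le s t -> le t s -> s = t),
      (forall r s t, T r -> T s -> T t -> le r s -> le s t -> le r t),
      (forall t, T t ->
         (forall x y, preds T le t x -> preds T le t y -> le x y \/ le y x) /\
         (forall X, X `<=` preds T le t -> X !=set0 ->
            exists m, X m /\ forall x, X x -> le m x)) &
      exists r, is_root T le r].

Definition imm_succ T le (t s : U) : Prop :=
  [/\ T t, T s, le t s, s <> t &
      ~ (exists r, [/\ T r, le t r, r <> t, le r s & r <> s])].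

(* height omega: every level n < omega is nonempty and level omega is empty,
   i.e. all predecessor sets are finite and every finite level is inhabited *)
Definition height_omega T le : Prop :=
  (forall t, T t -> finite_set (preds T le t)) /\
  (forall n : nat, exists t, T t /\ preds T le t #= `I_n).

Definition segment T le S : Prop :=
  [/\ S `<=` T,
      (forall x y, S x -> S y -> le x y \/ le y x) &
      (forall t r s, S t -> S s -> T r -> le t r -> le r s -> S r)].

Definition initial_segment T le S : Prop :=
  segment T le S /\ exists r, is_root T le r /\ S r.

Definition imm_succ_seg T le S (t : U) : Prop :=
  exists m, [/\ S m, (forall x, S x -> le x m) & imm_succ T le m t].

End AbstractTrees.

(* Nodes of all trees live in a common universe U; the points of A (a subset of
   N) are identified with elements of U through the injection [inj].
   Tr a is the underlying set of T_a and le a its order. *)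
Definition union_trees (U : Type) (A : set BaireSpace) (Tr : BaireSpace -> set U) : set U :=
  \bigcup_(a in A) Tr a.

Definition reznichenko_family (U : Type) (inj : BaireSpace -> U) (A : set BaireSpace)
    (F : set (set BaireSpace)) (Tr : BaireSpace -> set U) (le : BaireSpace -> U -> U -> Prop) : Prop :=
  [/\
      (forall a, A a ->
        [/\ is_tree (Tr a) (le a), height_omega (Tr a) (le a) &
            forall t, Tr a t ->
              [set s | imm_succ (Tr a) (le a) t s] #= [set: nat -> bool]]),
      (forall a, A a ->
        Tr a `&` (inj @` A) = [set inj a] /\ is_root (Tr a) (le a) (inj a)),
      (forall t, union_trees A Tr t -> F [set a | A a /\ Tr a t]),
      (forall a b, A a -> A b -> a <> b ->
        forall S S', segment (Tr a) (le a) S -> segment (Tr b) (le b) S' ->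
        forall x y, (S `&` S') x -> (S `&` S') y -> x = y) &
      (forall B, F B -> forall Sf : BaireSpace -> set U,
        (forall b, B b -> initial_segment (Tr b) (le b) (Sf b) /\ finite_set (Sf b)) ->
        (forall b c, B b -> B c -> b <> c -> Sf b `&` Sf c = set0) ->
        [set t | union_trees A Tr t /\
                 forall b, B b -> imm_succ_seg (Tr b) (le b) (Sf b) t]
          #= [set: nat -> bool])].

(* R[F]: all segments of all the trees T_a, as points of R^T (indicators) *)
Definition RF (R : realType) (U : Type) (A : set BaireSpace) (Tr : BaireSpace -> set U)
    (le : BaireSpace -> U -> U -> Prop) : set (U -> R) :=
  [set x | exists a S, [/\ A a, segment (Tr a) (le a) S & x = indic S]].

(* trees on omega: subsets of omega^<omega (coded as points of 2^(omega^<omega))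
   closed under initial segments *)
Definition tree_on (T : seq nat -> bool) : Prop :=
  forall (s : seq nat) (n : nat), T s -> T (take n s).

Definition branch_of (T : seq nat -> bool) (a : nat -> nat) : Prop :=
  forall n, T (mkseq a n).

Definition wf (A : set BaireSpace) : set (seq nat -> bool) :=
  [set T | tree_on T /\ forall a : BaireSpace, branch_of T a -> ~ A a].

Definition Dspace : Type :=
  ({ptws seq nat -> bool} * {ptws seq nat -> nat})%type.

Definition wf_times (A : set BaireSpace) : set Dspace := [set p | wf A p.1].

(* f : T -> D is a determining function for K ⊂ R^T (T given as a subset of U);
   compact subsets of the subspace D are the compact subsets of the ambient
   space contained in D *)
Definition determining (R : realType) (U : Type) (Gam : set U) (K : set (U -> R))
    (D : set Dspace) (f : U -> Dspace) : Prop :=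
  (forall g, Gam g -> D (f g)) /\
  forall x, K x -> forall C : set Dspace, compact C -> C `<=` D ->
    forall eps : R, (0 < eps)%R ->
      finite_set [set g | [/\ Gam g, C (f g) & (eps < `|x g|)%R]].

(* Main.v *)
Require Import Defs.
From HB Require Import structures.
From mathcomp Require Import all_boot all_order all_algebra.
From mathcomp Require Import all_classical all_reals all_analysis.
From mathcomp Require Import finmap.
Import Order.TTheory GRing.Theory Num.Theory.
Local Open Scope classical_set_scope.

Lemma cyl_nbhs (a : BaireSpace) (V : set BaireSpace) : nbhs a V ->
  exists n : nat, forall b : BaireSpace, (forall i, (i < n)%N -> b i = a i) -> V b.
Proof.
move=> aV.
set G := filter_from [set: nat]
  (fun n => [set b : BaireSpace | forall i, (i < n)%N -> b i = a i]).
have FG : Filter G.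
  apply: filter_from_filter; first by exists 0%N.
  move=> i j _ _; exists (maxn i j) => // b /= Hb; split => k Hk; apply: Hb;
  rewrite leq_max Hk ?orbT //.
have : G --> (a : BaireSpace).
  apply/(@pointwise_cvgP nat nat G a FG) => t B /= Bt.
  rewrite /= /nbhs /=; exists t.+1 => // b /= Hb; rewrite /= Hb //.
  exact: nbhs_singleton.
by move=> /(_ V aV) [n _ Hn]; exists n => b Hb; apply: Hn.
Qed.
Lemma compact_incr (X : topologicalType) (C : set X) (V : nat -> set X) :
  compact C -> (forall m, open (V m)) ->
  (forall m n x, (m <= n)%N -> C x -> V m x -> V n x) ->
  (forall x, C x -> exists m, V m x) ->
  exists m, C `<=` V m.
Proof.
move=> cC oV mV cov.
have := iffRL (near_covering_withinP C) (iffLR (compact_near_coveringP C) cC).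
move=> /(_ nat (\oo) (fun i x => V i x) _) H.
have [] := H _.
  move=> x Cx; have [m Vm] := cov x Cx.
  exists (V m, [set i | (m <= i)%N]) => /=.
    split; first by apply: open_nbhs_nbhs; split.
    by exists m.
  by move=> [y i] [Vy mi] Cy; exact: (mV m i y mi Cy Vy).
move=> N _ HN; exists N; exact: (HN N (leqnn N)).
Qed.

Definition depth (U : Type) (T : set U) (le : U -> U -> Prop) (t : U) : nat :=
  (#|` @fset_set {classic U} (Defs.preds T le t)|)%fset.
Arguments depth {U}.

Lemma depth_lt (U : Type) (T : set U) (le : U -> U -> Prop) (s t : U) :
  is_tree T le -> (forall t, T t -> finite_set (Defs.preds T le t)) ->
  T s -> T t -> le s t -> s <> t -> (depth T le s < depth T le t)%N.
Proof.
move=> [refl anti trans _ _] fin Ts Tt st nst.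
rewrite /depth.
have fs := fin s Ts; have ft := fin t Tt.
have sub : ((s : {classic U}) |` @fset_set {classic U} (Defs.preds T le s) `<=`
            @fset_set {classic U} (Defs.preds T le t))%fset.
  apply/fsubsetP => x; rewrite !inE => /orP[/eqP ->|].
    by rewrite in_fset_set //; apply/mem_set; split => //; split.
  rewrite !in_fset_set // => /set_mem [Tx [xs nxs]]; apply/mem_set; split => //; split.
    exact: (trans x s t).
  by move=> xt; subst x; apply: nst; apply: anti.
have := fsubset_leq_card sub; rewrite cardfsU1.
have -> : ((s : {classic U}) \notin @fset_set {classic U} (Defs.preds T le s)) = true.
  by rewrite in_fset_set //; apply/negP => /set_mem [_ []].
by [].
Qed.

Arguments depth_lt {U T le s t}.

Definition pref (s : seq nat) : set BaireSpace :=
  [set b | forall i, (i < size s)%N -> nth 0%N s i = b i].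

Definition At (U : Type) (A : set BaireSpace) (Tr : BaireSpace -> set U) (t : U)
  : set BaireSpace := [set b | A b /\ Tr b t].
Arguments At {U}.

Definition Wt (U : Type) (A : set BaireSpace) (Tr : BaireSpace -> set U) (t : U)
  : seq nat -> bool := fun s =>
  `[< exists b c, [/\ At A Tr t b, At A Tr t c, b <> c, pref s b & pref s c] >].
Arguments Wt {U}.

Lemma pref_mkseq (a b : BaireSpace) n :
  pref (mkseq a n) b <-> forall i, (i < n)%N -> b i = a i.
Proof.
rewrite /pref size_mkseq; split => H i ilt.
  by rewrite -H // nth_mkseq.
by rewrite nth_mkseq // H.
Qed.

Lemma pref_take s n b : pref s b -> pref (take n s) b.
Proof.
move=> H i; rewrite size_take_min leq_min => /andP[iln ils].
by rewrite nth_take // H.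
Qed.

Lemma Wt_wf (U : Type) (A : set BaireSpace) (F : set (set BaireSpace))
  (Tr : BaireSpace -> set U) (t : U) :
  hereditary_closed_discrete A F -> F (At A Tr t) -> wf A (Wt A Tr t).
Proof.
move=> [_ _ hcl hdi] FA; split.
  move=> s n /asboolP [b [c [Ab Ac bc pb pc]]]; apply/asboolP; exists b, c; split => //;
  exact: pref_take.
move=> a br Aa.
have Aat : At A Tr t a.
  apply: (hcl _ FA); split => // B /cyl_nbhs [n Hn].
  have /asboolP [b [c [Ab Ac bc pb pc]]] := br n.
  exists b; split => //; apply: Hn; exact/pref_mkseq.
have [V [oV Va VA]] := hdi _ FA a Aat.
have [n Hn] := @cyl_nbhs a V (open_nbhs_nbhs (conj oV Va)).
have /asboolP [b [c [Ab Ac bc pb pc]]] := br n.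
have eb : b = a by apply: (VA b); split => //; apply: Hn; exact/pref_mkseq.
have ec : c = a by apply: (VA c); split => //; apply: Hn; exact/pref_mkseq.
by apply: bc; rewrite eb ec.
Qed.

Definition code (U : Type) (A : set BaireSpace) (Tr : BaireSpace -> set U)
  (le : BaireSpace -> U -> U -> Prop) (t : U) (s : seq nat) : nat :=
  match pselect (exists b, At A Tr t `&` pref s = [set b]) with
  | left h => depth (Tr (sval (cid h))) (le (sval (cid h))) t
  | right _ => 0%N
  end.
Arguments code {U}.

Lemma code_eq (U : Type) (A : set BaireSpace) (Tr : BaireSpace -> set U)
  (le : BaireSpace -> U -> U -> Prop) (t : U) (s : seq nat) (a : BaireSpace) :
  At A Tr t a -> pref s a -> Wt A Tr t s = false ->
  code A Tr le t s = depth (Tr a) (le a) t.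
Proof.
move=> Ata psa W0.
have E : At A Tr t `&` pref s = [set a].
  apply/seteqP; split => [b [Atb psb]|b ->] //=.
  apply/eqP/negPn/negP => /eqP nba; move/negP: W0; apply; apply/asboolP.
  by exists b, a; split.
rewrite /code; case: pselect => [h|hn]; last by exfalso; apply: hn; exists a.
case: (cid h) => b /= Eb.
have : [set b] a by rewrite -Eb E.
by move=> /= ->.
Qed.

Lemma c1 (s : seq nat) : continuous (fun p : Dspace => p.1 s).
Proof. move=> p. have := @continuous_comp Dspace {ptws seq nat -> bool} bool fst (fun q => q s) p.
apply. exact: cvg_fst. exact: (@proj_continuous _ (fun _ => bool) s). Qed.
Lemma c2 (s : seq nat) : continuous (fun p : Dspace => p.2 s).
Proof. move=> p. have := @continuous_comp Dspace {ptws seq nat -> nat} nat snd (fun q => q s) p.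
apply. exact: cvg_snd. exact: (@proj_continuous _ (fun _ => nat) s). Qed.

Theorem theorem4p1 (R : realType) (U : Type) (inj : BaireSpace -> U) (A : set BaireSpace)
    (F : set (set BaireSpace)) (Tr : BaireSpace -> set U) (le : BaireSpace -> U -> U -> Prop) :
  injective inj ->
  hereditary_closed_discrete A F ->
  reznichenko_family inj A F Tr le ->
  exists f : U -> Dspace,
    determining (union_trees A Tr) (@RF R U A Tr le) (wf_times A) f.
Proof.
move=> _ hcd [r1 r2 r3 r4 r5].
exists (fun t => (Wt A Tr t : {ptws seq nat -> bool}, code A Tr le t : {ptws seq nat -> nat})).
split.
  move=> g Ug; apply: (@Wt_wf U A F) => //; exact: r3.
move=> x [a [S [Aa segS ->]]] C cC CD eps eps0.
have [trA [fin _] _] := r1 a Aa.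
have [m Hm] : exists m, C `<=` [set p : Dspace | p.1 (mkseq a m) = false].
  apply: compact_incr => //.
  - move=> k; exact: (iffLR (continuousP _) (c1 (mkseq a k)) [set false] (discrete_open _)).
  - move=> m1 n p mn Cp /= h; apply/negbTE/negP => h2.
    have [trp _] := CD p Cp.
    have := trp _ m1 h2.
    by rewrite /mkseq -map_take take_iota (minn_idPl mn) h.
  - move=> p Cp; have [_ nb] := CD p Cp.
    case: (pselect (exists n, ~~ p.1 (mkseq a n))) => [[n hn]|hno].
      by exists n; apply/negbTE.
    exfalso; apply: (nb a _ Aa) => n; apply/negPn/negP => h; apply: hno.
    by exists n.
have [j Hj] : exists j, C `<=` [set p : Dspace | (p.2 (mkseq a m) < j)%N].
  apply: compact_incr => //.
  - move=> k; exact: (iffLR (continuousP _) (c2 (mkseq a m)) [set i | (i < k)%N] (discrete_open _)).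
  - by move=> k1 k2 p k12 _ /= h; apply: leq_trans h k12.
  - by move=> p _; exists (p.2 (mkseq a m)).+1 => /=.
have [subS cmp _] := segS.
apply: (@sub_finite_set _ _ [set g | S g /\ (depth (Tr a) (le a) g < j)%N]).
  move=> g [Ug Cfg epsl].
  have Sg : S g.
    move: epsl; rewrite indicE; case: (boolP (g \in S)) => [/set_mem //|_].
    by rewrite normr0 => /(lt_trans eps0); rewrite ltxx.
  split => //.
  have /= W0 := Hm _ Cfg; have /= Jg := Hj _ Cfg.
  rewrite -(@code_eq U A Tr le g (mkseq a m) a) //.
    by split => //; apply: subS.
  exact/pref_mkseq.
set X := [set g | S g /\ (depth (Tr a) (le a) g < j)%N].
have injd : {in X &, injective (depth (Tr a) (le a))}.
  move=> g1 g2 /set_mem [S1 _] /set_mem [S2 _] e.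
  case: (pselect (g1 = g2)) => // ne.
  case: (cmp g1 g2 S1 S2) => l.
    by have := depth_lt trA fin (subS _ S1) (subS _ S2) l ne; rewrite e ltnn.
  have ne' : g2 <> g1 by move=> h; apply: ne.
  by have := depth_lt trA fin (subS _ S2) (subS _ S1) l ne'; rewrite e ltnn.
rewrite -(eq_finite_set (inj_card_eq injd)).
apply: (sub_finite_set _ (finite_II j)).
by move=> _ [g [_ dj] <-].
Qed.
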